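(* Let $m\ge 3$. Let $X_1,\dots,X_m\in\mathbb{C}^n$ with $X_i=(x_{i,1},\dots,x_{i,n})$, and let $\alpha_1,\dots,\alpha_m\in\mathbb{Z}_{\ge0}^n$. Put $X_i^{\alpha_j}=x_{i,1}^{\alpha_{j,1}}\cdots x_{i,n}^{\alpha_{j,n}}$. Let $$M=\max_{i,j}|X_i^{\alpha_j}|,\qquad B=\max_{i,j,k}\Big\{|X_i^{\alpha_j}-X_i^{\alpha_k}|,\ |X_j^{\alpha_i}-X_k^{\alpha_i}|\Big\},$$ with all indices ranging over $1,\dots,m$. Let $a_1,\dots,a_m\in\mathbb{C}$ and $\varepsilon=\max_{1\le i\le m}|a_i|$. Fix a column index $k\in\{1,\dots,m\}$ and let $V_m$ be the determinant of the $m\times m$ matrix obtained from $\big(X_i^{\alpha_j}\big)_{i,j=1}^m$ by replacing its $k$-th column with $(a_1,\dots,a_m)^T$. Then $|V_m|\le M^{m-2}\,m!\,B\,\varepsilon$. *)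

(* Defs.v *)
(* Complex numbers: any numClosedFieldType C (e.g. C = R[i]). *)
From HB Require Import structures.
From mathcomp Require Import all_boot all_order all_algebra.
Set Implicit Arguments. Unset Strict Implicit. Unset Printing Implicit Defensive.
Import Order.TTheory GRing.Theory Num.Theory.
Local Open Scope ring_scope.

Definition mono (C : numClosedFieldType) (m n : nat)
  (X : 'I_m -> 'I_n -> C) (alpha : 'I_m -> 'I_n -> nat) (i j : 'I_m) : C :=
  \prod_(l < n) X i l ^+ alpha j l.

(* M = max_{i,j} |X_i^{alpha_j}| (norms are real, so Num.max is the usual max) *)
Definition Mbound (C : numClosedFieldType) (m n : nat)
  (X : 'I_m -> 'I_n -> C) (alpha : 'I_m -> 'I_n -> nat) : C :=
  \big[Num.max/0]_(i < m) \big[Num.max/0]_(j < m) `|mono X alpha i j|.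

Definition Bbound (C : numClosedFieldType) (m n : nat)
  (X : 'I_m -> 'I_n -> C) (alpha : 'I_m -> 'I_n -> nat) : C :=
  \big[Num.max/0]_(i < m) \big[Num.max/0]_(j < m) \big[Num.max/0]_(k < m)
    Num.max `|mono X alpha i j - mono X alpha i k|
            `|mono X alpha j i - mono X alpha k i|.

Definition epsbound (C : numClosedFieldType) (m : nat) (a : 'I_m -> C) : C :=
  \big[Num.max/0]_(i < m) `|a i|.

Definition Vdet (C : numClosedFieldType) (m n : nat)
  (X : 'I_m -> 'I_n -> C) (alpha : 'I_m -> 'I_n -> nat) (a : 'I_m -> C)
  (k : 'I_m) : C :=
  \det (\matrix_(i < m, j < m) (if j == k then a i else mono X alpha i j)).

(* Main.v *)
Require Import Defs.
From HB Require Import structures.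
From mathcomp Require Import all_boot all_order all_algebra all_fingroup.
From mathcomp Require Import ring.
Import Order.TTheory GRing.Theory Num.Theory.
Local Open Scope ring_scope.
Set Implicit Arguments. Unset Strict Implicit.

Lemma max_ge (C : numDomainType) (x y : C) : 0 <= x -> 0 <= y ->
  [/\ x <= Num.max x y, y <= Num.max x y & 0 <= Num.max x y].
Proof.
move=> hx hy; have cxy : (x >=< y)%O by apply: real_comparable; apply: ger0_real.
by rewrite !comparable_le_max // !lexx /= ?orbT ?hx.
Qed.

Lemma bigmax_ge (C : numDomainType) (I : finType) (F : I -> C) (i0 : I) :
  (forall i, 0 <= F i) ->
  F i0 <= \big[Num.max/0]_i F i /\ 0 <= \big[Num.max/0]_i F i.
Proof.
move=> F0; have : i0 \in index_enum I by rewrite mem_index_enum.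
elim: (index_enum I) => [|x r IH] //= Hin.
rewrite big_cons /=.
have H0 : 0 <= \big[Num.max/0]_(j <- r) F j.
  elim: r {IH Hin} => [|y r IH]; first by rewrite big_nil.
  by rewrite big_cons; case: (max_ge (F0 y) IH).
case: (max_ge (F0 x) H0) => h1 h2 h3; split => //.
move: Hin; rewrite in_cons => /orP [/eqP -> //|Hr].
by case: (IH Hr) => h _; apply: le_trans h h2.
Qed.

Arguments bigmax_ge {C I} F i0.

Lemma three_idx (m : nat) (hm : (3 <= m)%N) (k : 'I_m) :
  exists j1 j2 : 'I_m, [/\ j1 != j2, j1 != k & j2 != k].
Proof.
have h0 : (0 < m)%N by apply: leq_trans hm.
have h1 : (1 < m)%N by apply: leq_trans hm.
have h2 : (2 < m)%N by [].
pose i0 := Ordinal h0; pose i1 := Ordinal h1; pose i2 := Ordinal h2.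
case: (eqVneq k i0) => [->|n0].
  by exists i1, i2.
case: (eqVneq k i1) => [->|n1].
  by exists i0, i2.
by exists i0, i1; split => //; rewrite eq_sym.
Qed.

Unset Implicit Arguments. Set Strict Implicit.

Theorem theorem3 (C : numClosedFieldType) (m n : nat) (hm : (3 <= m)%N)
  (X : 'I_m -> 'I_n -> C) (alpha : 'I_m -> 'I_n -> nat) (a : 'I_m -> C)
  (k : 'I_m) :
  `|Vdet X alpha a k| <=
    Mbound X alpha ^+ (m - 2) * (m`!)%:R * Bbound X alpha * epsbound a.
Proof.
have [j1 [j2 [n12 n1k n2k]]] := three_idx hm k.
set mo := mono X alpha.
pose A' := \matrix_(i < m, j < m) (if j == k then a i else if j == j1 then mo i j1 - mo i j2 else mo i j).
pose B' := \matrix_(i < m, j < m) (if j == k then a i else if j == j1 then mo i j2 else mo i j).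
have detB : \det B' = 0.
  rewrite -det_tr; apply: (determinant_alternate n12) => i.
  by rewrite !mxE (negbTE n1k) (negbTE n2k) eqxx eq_sym (negbTE n12).
have -> : Vdet X alpha a k = \det A'.
  have hl : forall i, (lift j1 i == j1) = false.
    by move=> i; apply/negbTE; rewrite eq_sym neq_lift.
  rewrite /Vdet; set V := \matrix_(i < m, j < m) _.
  rewrite -det_tr -[\det A']det_tr; symmetry.
  rewrite (@determinant_multilinear _ _ A'^T V^T B'^T j1 1 (-1)).
  - by rewrite !det_tr detB mulr0 addr0 mul1r.
  - apply/rowP => i; rewrite !mxE (negbTE n1k) eqxx.
    by rewrite mul1r mulN1r.
  - by apply/matrixP => i j; rewrite !mxE hl.
  - by apply/matrixP => i j; rewrite !mxE hl.
set Mb := Mbound X alpha; set Bb := Bbound X alpha; set eb := epsbound a.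
pose g j := if j == k then eb else if j == j1 then Bb else Mb.
have HM : forall i j, `|mo i j| <= Mb.
  move=> i j; rewrite /Mb /Mbound.
  have [h1 h2] := bigmax_ge (fun j => `|mo i j|) j (fun _ => normr_ge0 _).
  have [h3 _] := bigmax_ge (fun i => \big[Num.max/0]_(j < m) `|mo i j|) i
                   (fun i => (bigmax_ge (fun j => `|mo i j|) j (fun _ => normr_ge0 _)).2).
  exact: le_trans h1 h3.
have HE : forall i, `|a i| <= eb.
  by move=> i; exact: (bigmax_ge (fun i => `|a i|) i (fun _ => normr_ge0 _)).1.
have HB : forall i, `|mo i j1 - mo i j2| <= Bb.
  move=> i; rewrite /Bb /Bbound.
  pose h i j k := Num.max `|mono X alpha i j - mono X alpha i k|
            `|mono X alpha j i - mono X alpha k i|.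
  have h0 : forall i j k, 0 <= h i j k.
    by move=> i' j' k'; case: (max_ge (normr_ge0 (mono X alpha i' j' - mono X alpha i' k'))
                          (normr_ge0 (mono X alpha j' i' - mono X alpha k' i'))).
  have [e1 _ _] := max_ge (normr_ge0 (mono X alpha i j1 - mono X alpha i j2))
                          (normr_ge0 (mono X alpha j1 i - mono X alpha j2 i)).
  have [e2 _] := bigmax_ge (fun k => h i j1 k) j2 (fun _ => h0 _ _ _).
  have [e3 _] := bigmax_ge (fun j => \big[Num.max/0]_(k < m) h i j k) j1
     (fun j => (bigmax_ge (fun k => h i j k) j2 (fun _ => h0 _ _ _)).2).
  have [e4 _] := bigmax_ge (fun i => \big[Num.max/0]_(j < m) \big[Num.max/0]_(k < m) h i j k) i
     (fun i => (bigmax_ge (fun j => \big[Num.max/0]_(k < m) h i j k) j1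
     (fun j => (bigmax_ge (fun k => h i j k) j2 (fun _ => h0 _ _ _)).2)).2).
  exact: le_trans e1 (le_trans e2 (le_trans e3 e4)).
have Hent : forall i j, 0 <= `|A' i j| <= g j.
  move=> i j; rewrite normr_ge0 /= !mxE /g.
  by case: (j == k) => //; case: ifP.
have Hprod : \prod_j g j = eb * (Bb * Mb ^+ (m - 2)).
  rewrite (bigD1 k) //= (bigD1 j1) //= {1}/g eqxx {1}/g (negbTE n1k) eqxx.
  congr (_ * (_ * _)).
  rewrite (eq_bigr (fun _ => Mb)); last first.
    by move=> j /andP [h1 h2]; rewrite /g (negbTE h1) (negbTE h2).
  rewrite prodr_const; congr (_ ^+ _).
  have hc := cardC (pred2 k j1).
  have hk : (k != j1) by rewrite eq_sym.
  rewrite card2 hk card_ord in hc.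
  have -> : #|[pred j | (j != k) && (j != j1)]| = #|[predC pred2 k j1]|.
    by apply: eq_card => j; rewrite !inE negb_or.
  move: hc; set c := #|_|; clearbody c => hc.
  by rewrite -hc addKn.
rewrite /determinant.
apply: le_trans (ler_norm_sum _ _ _) _.
apply: (@le_trans _ _ (\sum_(s : {perm 'I_m}) \prod_j g j)).  
  apply: ler_sum => s _; rewrite normrMsign normr_prod.
  rewrite [X in _ <= X](reindex_inj (@perm_inj _ s)) /=.
  by apply: ler_prod => i _; apply: Hent.
rewrite sumr_const card_Sn Hprod -mulr_natr.
rewrite mul1r -[_ *+ _]mulr_natr le_eqVlt; apply/orP; left; apply/eqP; ring.
Qed.
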